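(* Let $X$ be a $T_1$ topological space with at least two points and let $f\neq g$ be vertices of $\Gamma(C_c(X)_F)$. Then (i) $c(f,g)=3$ iff $Z(f)\cup Z(g)=X$ and $Z(f)\cap Z(g)\neq\emptyset$; (ii) $c(f,g)=4$ iff either ($Z(f)\cup Z(g)=X$ and $Z(f)\cap Z(g)=\emptyset$) or ($Z(f)\cup Z(g)\neq X$ and $Z(f)\cap Z(g)\neq\emptyset$); (iii) $c(f,g)=6$ iff $Z(f)\cup Z(g)\neq X$ and $Z(f)\cap Z(g)=\emptyset$.
   Context: $C_c(X)_F$ denotes the set of all functions $f:X\to\mathbb{R}$ whose range is countable and whose set of points of discontinuity is finite. $Z(f)=\{x:f(x)=0\}$. $\Gamma(C_c(X)_F)$ is the zero-divisor graph: vertices are the nonzero zero divisors of $C_c(X)_F$, and distinct vertices $f,g$ are adjacent iff $fg=0$. $c(f,g)$ is the length of a shortest cycle (with distinct vertices) containing both $f$ and $g$, and $c(f,g)=\infty$ if no such cycle exists. *)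

(* Defs.v *)
From HB Require Import structures.
From mathcomp Require Import all_boot all_order all_algebra.
From mathcomp Require Import all_classical all_reals all_analysis.
Set Implicit Arguments. Unset Strict Implicit. Unset Printing Implicit Defensive.
Import Order.TTheory GRing.Theory Num.Theory numFieldNormedType.Exports.
Local Open Scope classical_set_scope.
Local Open Scope ring_scope.

Definition CcF (X : topologicalType) (R : realType) (f : X -> R) : Prop :=
  countable (range f) /\ finite_set [set x : X | ~ {for x, continuous f}].

Definition Zset (X : Type) (R : realType) (f : X -> R) : set X :=
  [set x | f x = 0].

Definition vertex (X : topologicalType) (R : realType) (f : X -> R) : Prop :=
  CcF f /\ f <> (fun _ => 0) /\
  exists g : X -> R, CcF g /\ g <> (fun _ => 0) /\ (forall x, f x * g x = 0).

Definition adj (X : topologicalType) (R : realType) (f g : X -> R) : Prop :=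
  vertex f /\ vertex g /\ f <> g /\ (forall x, f x * g x = 0).

Definition is_cycle (X : topologicalType) (R : realType) (n : nat)
    (v : nat -> X -> R) : Prop :=
  (3 <= n)%N /\
  (forall i j, (i < n)%N -> (j < n)%N -> v i = v j -> i = j) /\
  (forall i, (i < n)%N -> adj (v i) (v ((i.+1) %% n)%N)).

Definition cycle_through (X : topologicalType) (R : realType) (n : nat)
    (f g : X -> R) : Prop :=
  exists v : nat -> X -> R, is_cycle n v /\
    (exists i, (i < n)%N /\ v i = f) /\ (exists j, (j < n)%N /\ v j = g).

Definition cfg_eq (X : topologicalType) (R : realType) (f g : X -> R)
    (n : nat) : Prop :=
  cycle_through n f g /\ forall m, (m < n)%N -> ~ cycle_through m f g.

(* Main.v *)
Require Import Defs.
From HB Require Import structures.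
From mathcomp Require Import all_boot all_order all_algebra.
From mathcomp Require Import all_classical all_reals all_analysis.
Import Order.TTheory GRing.Theory Num.Theory.
Local Open Scope classical_set_scope.
Local Open Scope ring_scope.

Set Implicit Arguments. Unset Strict Implicit.
Definition Ad (X : Type) (R : realType) (f g : X -> R) := forall x, f x * g x = 0.

Section S.
Variables (R : realType) (X : topologicalType).
Hypothesis hT1 : accessible_space X.
Hypothesis htwo : exists x y : X, x <> y.

Definition delta (x : X) (c : R) : X -> R := fun y => if y == x then c else 0.

Lemma delta_CcF x c : CcF (delta x c).
Proof.
split.
  apply: finite_set_countable; apply: (sub_finite_set _ (finite_set2 c 0)).
  by move=> _ [y _ <-]; rewrite /delta; case: ifP => _; [left|right].
apply: (sub_finite_set _ (finite_set1 x)) => y /= Hc.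
case: (eqVneq y x) => [//|Hyx]; exfalso; apply: Hc.
have [A [oA Ay Ax]] := hT1 Hyx.
apply: (near_cst_continuous 0).
have : nbhs y A by apply: open_nbhs_nbhs; split => //; move: Ay; rewrite inE.
apply: filterS => z Az; rewrite /delta; case: eqP => // zx.
by move: Ax; rewrite inE /= -zx.
Qed.

Lemma delta_neq x c (f : X -> R) : f x != c -> delta x c <> f.
Proof. by move=> H E; move: H; rewrite -E /delta eqxx eqxx. Qed.

Lemma delta_neq2 x y c d : x != y -> c != 0 -> delta x c <> delta y d.
Proof.
move=> xy c0 E; have := congr1 (fun h => h x) E; rewrite /delta eqxx (negbTE xy).
by move/eqP; rewrite (negbTE c0).
Qed.

Lemma delta_neq3 x c d : c != d -> delta x c <> delta x d.
Proof.
move=> cd E; have := congr1 (fun h => h x) E; rewrite /delta eqxx.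
by move/eqP; rewrite (negbTE cd).
Qed.

Lemma Ad_sym (f g : X -> R) : Ad f g -> Ad g f.
Proof. by move=> H x; rewrite mulrC. Qed.

Lemma Ad_dl (f : X -> R) x c : f x = 0 -> Ad (delta x c) f.
Proof. by move=> fx y; rewrite /delta; case: eqP => [->|_]; rewrite ?fx ?mulr0 ?mul0r. Qed.

Lemma Ad_dr (f : X -> R) x c : f x = 0 -> Ad f (delta x c).
Proof. by move=> fx; apply: Ad_sym; apply: Ad_dl. Qed.

Lemma Ad_dd x y c d : x != y -> Ad (delta x c) (delta y d).
Proof.
move=> xy; apply: Ad_dl; rewrite /delta; case: eqP => // E.
by rewrite E eqxx in xy.
Qed.

Lemma vertex_delta x c : c != 0 -> vertex (delta x c).
Proof.
move=> c0; split; first exact: delta_CcF.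
split.
  move=> E; have := congr1 (fun h => h x) E; rewrite /delta eqxx => /eqP.
  by rewrite (negbTE c0).
have [y [y' yy']] := htwo.
have [z zx] : exists z, z != x.
  case: (eqVneq y x) => [Ey|]; last by exists y.
  by exists y'; apply/eqP => E; apply: yy'; rewrite Ey E.
exists (delta z 1); split; first exact: delta_CcF.
split.
  move=> E; have := congr1 (fun h => h z) E; rewrite /delta eqxx => /eqP.
  by rewrite oner_eq0.
by apply: Ad_dd; rewrite eq_sym.
Qed.
End S.

Section C.
Variables (R : realType) (X : topologicalType).
Implicit Types (f g h : X -> R) (v : nat -> X -> R).

Ltac dec := repeat match goal with H : adj _ _ |- _ =>
  let A:=fresh in let B:=fresh in let C:=fresh in let D := fresh in
  case: H => A [B [_ C]]; have D := Ad_sym C end.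

Ltac fin v := first [ by left; assumption
  | solve [right; exists (v 0%N); split; [|split]; assumption]
  | solve [right; exists (v 1%N); split; [|split]; assumption]
  | solve [right; exists (v 2%N); split; [|split]; assumption]
  | solve [right; exists (v 3%N); split; [|split]; assumption]
  | solve [right; exists (v 4%N); split; [|split]; assumption] ].

Lemma short n v i j : is_cycle n v -> (n <= 5)%N -> (i < n)%N -> (j < n)%N -> i != j ->
  Ad (v i) (v j) \/ exists h, vertex h /\ Ad (v i) h /\ Ad h (v j).
Proof.
move=> [n3 [_ E]]; case: n n3 E => [|[|[|[|[|[|n]]]]]] //= _ E _.
- have a0 : adj (v 0) (v 1) := E 0%N isT.
  have a1 : adj (v 1) (v 2) := E 1%N isT.
  have a2 : adj (v 2) (v 0) := E 2%N isT.
  dec.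
  case: i => [|[|[|i]]] //; case: j => [|[|[|j]]] //; fin v.
- have a0 : adj (v 0) (v 1) := E 0%N isT.
  have a1 : adj (v 1) (v 2) := E 1%N isT.
  have a2 : adj (v 2) (v 3) := E 2%N isT.
  have a3 : adj (v 3) (v 0) := E 3%N isT.
  dec.
  case: i => [|[|[|[|i]]]] //; case: j => [|[|[|[|j]]]] //; fin v.
- have a0 : adj (v 0) (v 1) := E 0%N isT.
  have a1 : adj (v 1) (v 2) := E 1%N isT.
  have a2 : adj (v 2) (v 3) := E 2%N isT.
  have a3 : adj (v 3) (v 4) := E 3%N isT.
  have a4 : adj (v 4) (v 0) := E 4%N isT.
  dec.
  case: i => [|[|[|[|[|i]]]]] //; case: j => [|[|[|[|[|j]]]]] //; fin v.
Qed.

Lemma short3 v i j : is_cycle 3 v -> (i < 3)%N -> (j < 3)%N -> i != j ->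
  Ad (v i) (v j) /\ exists h, vertex h /\ Ad (v i) h /\ Ad h (v j).
Proof.
move=> [_ [_ E]].
have a0 : adj (v 0) (v 1) := E 0%N isT.
have a1 : adj (v 1) (v 2) := E 1%N isT.
have a2 : adj (v 2) (v 0) := E 2%N isT.
dec.
case: i => [|[|[|i]]] //; case: j => [|[|[|j]]] // _ _ _; split; try assumption;
 first [ solve [exists (v 0%N); split; [|split]; assumption]
       | solve [exists (v 1%N); split; [|split]; assumption]
       | solve [exists (v 2%N); split; [|split]; assumption]].
Qed.

Lemma cyc_short m f g : f <> g -> cycle_through m f g -> (m <= 5)%N ->
  Ad f g \/ exists h, vertex h /\ Ad f h /\ Ad h g.
Proof.
move=> fg [v [C [[i [Hi Ei]] [j [Hj Ej]]]]] m5; rewrite -Ei -Ej.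
apply: (short C) => //; apply/eqP => ij; apply: fg; by rewrite -Ei -Ej ij.
Qed.

Lemma cyc_short3 f g : f <> g -> cycle_through 3 f g ->
  Ad f g /\ exists h, vertex h /\ Ad f h /\ Ad h g.
Proof.
move=> fg [v [C [[i [Hi Ei]] [j [Hj Ej]]]]]; rewrite -Ei -Ej.
apply: (short3 C) => //; apply/eqP => ij; apply: fg; by rewrite -Ei -Ej ij.
Qed.

Lemma cyc_ge3 m f g : cycle_through m f g -> (3 <= m)%N.
Proof. by move=> [v [[]]]. Qed.
End C.

Ltac inj_tac := case=> [|[|[|[|[|[|?]]]]]]; case=> [|[|[|[|[|[|?]]]]]]; move=> //= _ _ ?; exfalso;
  match goal with H : _ <> _, E : _ = _ |- _ => first [exact: H E | exact: H (esym E)] end.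
Ltac adj_tac := case=> [|[|[|[|[|[|?]]]]]]; move=> //= _;
  match goal with H : adj _ _ |- _ => exact: H end.

Section M.
Variables (R : realType) (X : topologicalType).
Hypothesis hT1 : accessible_space X.
Hypothesis htwo : exists x y : X, x <> y.
Implicit Types (f g h : X -> R).

Lemma vzero f : vertex f -> exists x, f x = 0.
Proof.
move=> [_ [_ [h [_ [hn H]]]]].
have [x hx] : exists x, h x != 0.
  apply: contrapT => N; apply: hn; apply: funext => x.
  by apply/eqP; apply: contrapT => hx; apply: N; exists x; apply/negP.
by exists x; move/eqP: (H x); rewrite mulf_eq0 (negbTE hx) orbF => /eqP.
Qed.

Lemma U_Ad f g : Zset f `|` Zset g = setT <-> Ad f g.
Proof.
split.
  move=> U x; have : (Zset f `|` Zset g) x by rewrite U.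
  by case => /= ->; rewrite ?mul0r ?mulr0.
move=> H; apply/seteqP; split => // x _.
by move/eqP: (H x); rewrite mulf_eq0 => /orP[/eqP|/eqP]; [left|right].
Qed.

Lemma I_ex f g : Zset f `&` Zset g <> set0 <-> exists x, f x = 0 /\ g x = 0.
Proof.
split.
  move=> N; apply: contrapT => N2; apply: N; apply/seteqP; split => // x [].
  by move=> /= a b; apply: N2; exists x.
by move=> [x [a b]] E; have : (Zset f `&` Zset g) x by []; rewrite E.
Qed.

Lemma nbr_ex f g : (exists h, vertex h /\ Ad f h /\ Ad h g) -> exists x, f x = 0 /\ g x = 0.
Proof.
move=> [h [[_ [hn _]] [A B]]].
have [x hx] : exists x, h x != 0.
  apply: contrapT => N; apply: hn; apply: funext => x.
  by apply/eqP; apply: contrapT => hx; apply: N; exists x; apply/negP.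
exists x; split.
  by move/eqP: (A x); rewrite mulf_eq0 (negbTE hx) orbF => /eqP.
by move/eqP: (B x); rewrite mulf_eq0 (negbTE hx) /= => /eqP.
Qed.

Lemma absp (a : R) : `|a| + 1 != 0.
Proof. by rewrite gt_eqF // ltr_wpDl. Qed.
Lemma absp2 (a : R) : `|a| + 1 != a.
Proof. by rewrite gt_eqF // (le_lt_trans (ler_norm a)) // ltrDl. Qed.
Lemma absq (a : R) : `|a| + 2 != 0.
Proof. by rewrite gt_eqF // ltr_wpDl. Qed.
Lemma absq2 (a : R) : `|a| + 2 != a.
Proof. by rewrite gt_eqF // (le_lt_trans (ler_norm a)) // ltrDl. Qed.
Lemma absd (a : R) : `|a| + 1 != `|a| + 2.
Proof. by rewrite (inj_eq (addrI _)) eq_sym (_ : 2 = 1 + 1) // -subr_eq0 addrK oner_eq0. Qed.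

Variables (f g : X -> R).
Hypotheses (hf : vertex f) (hg : vertex g) (hfg : f <> g).

Lemma case1 : Ad f g -> (exists x, f x = 0 /\ g x = 0) -> cycle_through 3 f g.
Proof.
move=> A [x [fx gx]].
have vh := vertex_delta hT1 htwo x (oner_neq0 R).
have n1 : delta x 1 <> f by apply: delta_neq; rewrite fx eq_sym oner_neq0.
have n2 : delta x 1 <> g by apply: delta_neq; rewrite gx eq_sym oner_neq0.
have a1 : adj f g by [].
have a2 : adj g (delta x 1) by split; [|split; [|split]] => //; [move=> E; apply: n2|apply: Ad_dr].
have a3 : adj (delta x 1) f by split; [|split; [|split]] => //; apply: Ad_dl.
exists (fun k => nth (fun _ => 0) [:: f; g; delta x 1] k); split.
  split => //; split; [inj_tac|adj_tac].
by split; [exists 0%N|exists 1%N].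
Qed.

Lemma case2 : Ad f g -> ~ (exists x, f x = 0 /\ g x = 0) -> cycle_through 4 f g.
Proof.
move=> A N.
have [x gx] := vzero hg; have [y fy] := vzero hf.
have xy : x != y by apply/eqP => E; apply: N; exists x; split => //; rewrite E.
pose c1 := `|f x| + 1; pose c2 := `|g y| + 1.
have vh := vertex_delta hT1 htwo x (absp (f x)).
have vk := vertex_delta hT1 htwo y (absp (g y)).
have n1 : delta x c1 <> f by apply: delta_neq; rewrite eq_sym absp2.
have n2 : delta x c1 <> g by apply: delta_neq; rewrite gx eq_sym absp.
have n3 : delta y c2 <> f by apply: delta_neq; rewrite fy eq_sym absp.
have n4 : delta y c2 <> g by apply: delta_neq; rewrite eq_sym absp2.
have n5 : delta x c1 <> delta y c2 by apply: delta_neq2 => //; apply: absp.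
have a1 : adj f g by [].
have a2 : adj g (delta x c1) by split; [|split; [|split]] => //; [move=> E; apply: n2|apply: Ad_dr].
have a3 : adj (delta x c1) (delta y c2) by split; [|split; [|split]] => //; apply: Ad_dd.
have a4 : adj (delta y c2) f by split; [|split; [|split]] => //; apply: Ad_dl.
exists (fun k => nth (fun _ => 0) [:: f; g; delta x c1; delta y c2] k); split.
  split => //; split; [inj_tac|adj_tac].
by split; [exists 0%N|exists 1%N].
Qed.

Lemma case3 : (exists x, f x = 0 /\ g x = 0) -> cycle_through 4 f g.
Proof.
move=> [x [fx gx]].
have vh := vertex_delta hT1 htwo x (oner_neq0 R).
have two0 : (2 : R) != 0 by rewrite pnatr_eq0.
have vk := vertex_delta hT1 htwo x two0.
have n1 : delta x 1 <> f by apply: delta_neq; rewrite fx eq_sym oner_neq0.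
have n2 : delta x 1 <> g by apply: delta_neq; rewrite gx eq_sym oner_neq0.
have n3 : delta x 2 <> f by apply: delta_neq; rewrite fx eq_sym.
have n4 : delta x 2 <> g by apply: delta_neq; rewrite gx eq_sym.
have n5 : delta x (1:R) <> delta x (2:R) by apply: delta_neq3; rewrite eq_sym -subr_eq0 (_ : (2:R) = 1 + 1) // addrK oner_eq0.
have a1 : adj f (delta x 1) by split; [|split; [|split]] => //; [move=> E; apply: n1|apply: Ad_dr].
have a2 : adj (delta x 1) g by split; [|split; [|split]] => //; apply: Ad_dl.
have a3 : adj g (delta x 2) by split; [|split; [|split]] => //; [move=> E; apply: n4|apply: Ad_dr].
have a4 : adj (delta x 2) f by split; [|split; [|split]] => //; apply: Ad_dl.
exists (fun k => nth (fun _ => 0) [:: f; delta x 1; g; delta x 2] k); split.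
  split => //; split; [inj_tac|adj_tac].
by split; [exists 0%N|exists 2%N].
Qed.

Lemma case4 : ~ (exists x, f x = 0 /\ g x = 0) -> cycle_through 6 f g.
Proof.
move=> N.
have [x fx] := vzero hf; have [y gy] := vzero hg.
have xy : x != y by apply/eqP => E; apply: N; exists x; split => //; rewrite E.
have yx : y != x by rewrite eq_sym.
pose c := `|g x| + 1; pose c' := `|g x| + 2.
pose d := `|f y| + 1; pose d' := `|f y| + 2.
have va := vertex_delta hT1 htwo x (absp (g x)).
have va' := vertex_delta hT1 htwo x (absq (g x)).
have vb := vertex_delta hT1 htwo y (absp (f y)).
have vb' := vertex_delta hT1 htwo y (absq (f y)).
have n1 : delta x c <> f by apply: delta_neq; rewrite fx eq_sym absp.
have n2 : delta x c' <> f by apply: delta_neq; rewrite fx eq_sym absq.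
have n3 : delta y d <> f by apply: delta_neq; rewrite eq_sym absp2.
have n4 : delta y d' <> f by apply: delta_neq; rewrite eq_sym absq2.
have n5 : delta x c <> g by apply: delta_neq; rewrite eq_sym absp2.
have n6 : delta x c' <> g by apply: delta_neq; rewrite eq_sym absq2.
have n7 : delta y d <> g by apply: delta_neq; rewrite gy eq_sym absp.
have n8 : delta y d' <> g by apply: delta_neq; rewrite gy eq_sym absq.
have n9 : delta x c <> delta x c' by apply: delta_neq3; apply: absd.
have n10 : delta y d <> delta y d' by apply: delta_neq3; apply: absd.
have n11 : delta x c <> delta y d by apply: delta_neq2 => //; apply: absp.
have n12 : delta x c <> delta y d' by apply: delta_neq2 => //; apply: absp.
have n13 : delta x c' <> delta y d by apply: delta_neq2 => //; apply: absq.
have n14 : delta x c' <> delta y d' by apply: delta_neq2 => //; apply: absq.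
have a1 : adj f (delta x c) by split; [|split; [|split]] => //; [move=> E; apply: n1|apply: Ad_dr].
have a2 : adj (delta x c) (delta y d) by split; [|split; [|split]] => //; apply: Ad_dd.
have a3 : adj (delta y d) g by split; [|split; [|split]] => //; apply: Ad_dl.
have a4 : adj g (delta y d') by split; [|split; [|split]] => //; [move=> E; apply: n8|apply: Ad_dr].
have a5 : adj (delta y d') (delta x c') by split; [|split; [|split]] => //; [move=> E; apply: n14|apply: Ad_dd].
have a6 : adj (delta x c') f by split; [|split; [|split]] => //; apply: Ad_dl.
exists (fun k => nth (fun _ => 0) [:: f; delta x c; delta y d; g; delta y d'; delta x c'] k); split.
  split => //; split; [inj_tac|adj_tac].
by split; [exists 0%N|exists 3%N].
Qed.

Lemma cfg_uniq n m : cfg_eq f g n -> cfg_eq f g m -> n = m.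
Proof.
move=> [Cn Nn] [Cm Nm]; case: (ltngtP n m) => // H.
- by case: (Nm _ H Cn).
- by case: (Nn _ H Cm).
Qed.

Lemma cfg3 : Ad f g -> (exists x, f x = 0 /\ g x = 0) -> cfg_eq f g 3.
Proof.
move=> A C; split; first exact: case1.
by move=> m hm Cm; have := cyc_ge3 Cm; rewrite leqNgt hm.
Qed.

Lemma m3 m : cycle_through m f g -> (m < 4)%N -> m = 3%N.
Proof. by move=> Cm hm; apply/eqP; rewrite eqn_leq (cyc_ge3 Cm) -ltnS hm. Qed.

Lemma cfg4a : Ad f g -> ~ (exists x, f x = 0 /\ g x = 0) -> cfg_eq f g 4.
Proof.
move=> A N; split; first exact: case2.
move=> m hm Cm; have E := m3 Cm hm; subst m.
by have [_ /nbr_ex] := cyc_short3 hfg Cm.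
Qed.

Lemma cfg4b : ~ Ad f g -> (exists x, f x = 0 /\ g x = 0) -> cfg_eq f g 4.
Proof.
move=> A N; split; first exact: case3.
move=> m hm Cm; have E := m3 Cm hm; subst m.
by have [] := cyc_short3 hfg Cm.
Qed.

Lemma cfg6 : ~ Ad f g -> ~ (exists x, f x = 0 /\ g x = 0) -> cfg_eq f g 6.
Proof.
move=> A N; split; first exact: case4.
move=> m hm Cm; have m5 : (m <= 5)%N by rewrite -ltnS.
by case: (cyc_short hfg Cm m5) => // /nbr_ex.
Qed.

End M.

Lemma I0 (R : realType) (X : Type) (f g : X -> R) :
  (Zset f `&` Zset g = set0) <-> ~ (exists x, f x = 0 /\ g x = 0).
Proof.
split.
  by move=> E [x [a b]]; have : (Zset f `&` Zset g) x by []; rewrite E.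
move=> N2; apply/seteqP; split => // x [].
by move=> /= a b; apply: N2; exists x.
Qed.

Theorem theorem8p16 (R : realType) (X : topologicalType)
  (hT1 : accessible_space X) (htwo : exists x y : X, x <> y)
  (f g : X -> R) (hf : vertex f) (hg : vertex g) (hfg : f <> g) :
  (cfg_eq f g 3 <-> (Zset f `|` Zset g = setT /\ Zset f `&` Zset g <> set0)) /\
  (cfg_eq f g 4 <->
     ((Zset f `|` Zset g = setT /\ Zset f `&` Zset g = set0) \/
      (Zset f `|` Zset g <> setT /\ Zset f `&` Zset g <> set0))) /\
  (cfg_eq f g 6 <-> (Zset f `|` Zset g <> setT /\ Zset f `&` Zset g = set0)).
Proof.
rewrite (propext (U_Ad f g)) (propext (I0 f g)).
have U := @cfg_uniq R X f g.
case: (pselect (Ad f g)) => a; case: (pselect (exists x, f x = 0 /\ g x = 0)) => c.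
- have H : cfg_eq f g 3 by apply: cfg3.
  have N4 : ~ cfg_eq f g 4 by move=> /(U _ _ H).
  have N6 : ~ cfg_eq f g 6 by move=> /(U _ _ H).
  tauto.
- have H : cfg_eq f g 4 by apply: cfg4a.
  have N3 : ~ cfg_eq f g 3 by move=> /(U _ _ H).
  have N6 : ~ cfg_eq f g 6 by move=> /(U _ _ H).
  tauto.
- have H : cfg_eq f g 4 by apply: cfg4b.
  have N3 : ~ cfg_eq f g 3 by move=> /(U _ _ H).
  have N6 : ~ cfg_eq f g 6 by move=> /(U _ _ H).
  tauto.
- have H : cfg_eq f g 6 by apply: cfg6.
  have N3 : ~ cfg_eq f g 3 by move=> /(U _ _ H).
  have N4 : ~ cfg_eq f g 4 by move=> /(U _ _ H).
  tauto.
Qed.
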